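(* Given an $n$-vertex undirected simple graph $G$ (as an edge stream) and an integer $k$, there exists a deterministic streaming algorithm using $O(k\log n)$ passes and $\tilde O(kn)$ space that either outputs the partition of $V(G)$ into the vertex sets of the connected components of the complement $\overline{G}$, or finds an induced copy of $\text{co-}P_{k+2}$ in $G$.
   Context: Insertion-only streaming model: the edges of $G$ arrive as a stream in arbitrary order; the algorithm knows $n$, may scan the stream from beginning to end several times (passes), and its space is measured in bits. $P_m$ is the path on $m$ vertices and $\text{co-}P_m$ its complement. $\tilde O$ hides polylogarithmic factors in $n$. *)

(* Defs.v *)
From mathcomp Require Import all_boot all_order.
Set Implicit Arguments. Unset Strict Implicit. Unset Printing Implicit Defensive.

Definition valid_stream (n : nat) (s : seq {set 'I_n}) : bool :=
  uniq s && all (fun e : {set 'I_n} => #|e| == 2) s.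

Definition adj (n : nat) (s : seq {set 'I_n}) (x y : 'I_n) : bool :=
  (x != y) && ([set x; y] \in s).

Definition coadj (n : nat) (s : seq {set 'I_n}) (x y : 'I_n) : bool :=
  (x != y) && ~~ adj s x y.

Definition co_components (n : nat) (s : seq {set 'I_n}) : {set {set 'I_n}} :=
  [set [set y | connect (coadj s) x y] | x : 'I_n].

Definition induced_coP (n : nat) (s : seq {set 'I_n}) (m : nat)
    (p : seq 'I_n) : Prop :=
  size p = m /\ uniq p /\
  forall (i j : nat) (x y : 'I_n), onth p i = Some x -> onth p j = Some y ->
    i != j -> adj s x y = (i.+1 != j) && (j.+1 != i).

Inductive answer (n : nat) : Type :=
  | Partition of {set {set 'I_n}}
  | CoPath of seq 'I_n.

(* The memory is a bit string; it is updated by an arbitrary function on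
   each stream element (computation is free, only space is measured, as is
   standard), may be transformed at the end of each pass, and the answer is
   a function of the memory after the last pass. *)
Record salg (n : nat) := SAlg {
  sa_passes : nat;
  sa_init : bitseq;
  sa_step : bitseq -> {set 'I_n} -> bitseq;
  sa_end_pass : bitseq -> bitseq;
  sa_out : bitseq -> answer n }.

Definition run_pass (n : nat) (A : salg n) (s : seq {set 'I_n}) (st : bitseq) :=
  sa_end_pass A (foldl (sa_step A) st s).

Definition state_at (n : nat) (A : salg n) (s : seq {set 'I_n}) (i : nat) :=
  iter i (run_pass A s) (sa_init A).

Definition uses_space (n : nat) (A : salg n) (s : seq {set 'I_n}) (S : nat) :=
  (forall i, i < sa_passes A ->
     all (fun b => size b <= S) (scanl (sa_step A) (state_at A s i) s)) /\
  (forall i, i <= sa_passes A -> size (state_at A s i) <= S).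

Definition output (n : nat) (A : salg n) (s : seq {set 'I_n}) : answer n :=
  sa_out A (state_at A s (sa_passes A)).

Definition correct_answer (n k : nat) (s : seq {set 'I_n}) (a : answer n) :=
  match a with
  | Partition P => P = co_components s
  | CoPath p => induced_coP s (k + 2) p
  end.

(* Main.v *)
Require Import Defs.
From mathcomp Require Import all_boot all_order.
From mathcomp Require Import zify.
Set Implicit Arguments. Unset Strict Implicit. Unset Printing Implicit Defensive.

Section Graph.
Variables (n : nat) (s : seq {set 'I_n}).

Lemma adjC x y : adj s x y = adj s y x.
Proof. by rewrite /adj eq_sym setUC. Qed.
Lemma coadjC x y : coadj s x y = coadj s y x.
Proof. by rewrite /coadj adjC eq_sym. Qed.
Lemma coadj_sym : symmetric (coadj s).
Proof. exact: coadjC. Qed.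

Fixpoint reach t (a b : 'I_n) : bool :=
  if t is t'.+1 then [exists w, reach t' a w && ((w == b) || coadj s w b)]
  else a == b.

Lemma reachS t a b : reach t a b -> reach t.+1 a b.
Proof. move=> h /=; apply/existsP; exists b; by rewrite h eqxx. Qed.
Lemma reach_mono t t' a b : t <= t' -> reach t a b -> reach t' a b.
Proof.
move=> /subnK <-; elim: (t' - t) => //= d IH h.
exact: reachS (IH h).
Qed.
Lemma reach_trans t t' a b c : reach t a b -> reach t' b c -> reach (t + t') a c.
Proof.
elim: t' c => [|t' IH] c hab /=; first by rewrite addn0 => /eqP <-.
move=> /existsP [w /andP [hbw hwc]]; rewrite addnS /=.
apply/existsP; exists w; by rewrite (IH _ hab hbw).
Qed.
Lemma reach1 a b : (a == b) || coadj s a b -> reach 1 a b.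
Proof. move=> h /=; apply/existsP; exists a; by rewrite eqxx. Qed.

Variables (k : nat) (L : nat -> 'I_n -> nat) (par : nat -> 'I_n -> 'I_n).
Hypothesis H0 : forall v, L 0 v = v.
Hypothesis Hpar : forall t v, t <= k -> (par t.+1 v == v) || coadj s (par t.+1 v) v.
Hypothesis HL : forall t v, t <= k -> L t.+1 v = L t (par t.+1 v).
Hypothesis Hle : forall t v, t <= k -> L t.+1 v <= L t v.
Hypothesis Hmin : forall t v u, t <= k -> coadj s u v -> L t.+1 v <= L t u.

Lemma reach_L t m v : t <= k.+1 -> reach t m v -> L t v <= m.
Proof.
elim: t v => [|t IH] v ht /=; first by move=> /eqP ->; rewrite H0.
move=> /existsP [w /andP [hw hwv]].
have ht' : t <= k by [].
have := IH w (ltnW ht) hw.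
case/orP: hwv => [/eqP <-|hc] h.
- exact: (leq_trans (Hle w ht') h).
- exact: (leq_trans (Hmin ht' hc) h).
Qed.

Lemma L_conn t v : t <= k.+1 -> exists m : 'I_n, L t v = m /\ connect (coadj s) m v.
Proof.
elim: t v => [|t IH] v ht; first by exists v; rewrite H0 connect0.
have [m [hm hc]] := IH (par t.+1 v) (ltnW ht).
exists m; rewrite HL // hm; split => //.
apply: connect_trans hc _.
case/orP: (Hpar v ht) => [/eqP ->|h]; first exact: connect0.
exact: connect1.
Qed.

Section Fix.
Hypothesis Hfix : forall v, L k.+1 v = L k v.

Lemma Lconst a b : coadj s a b -> L k a = L k b.
Proof.
move=> h; have h1 := Hmin (leqnn k) h.
have h2 := Hmin (leqnn k) (_ : coadj s b a); rewrite coadjC in h2.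
have {}h2 := h2 h. rewrite !Hfix in h1 h2.
by apply/eqP; rewrite eqn_leq h1 h2.
Qed.

Lemma part_eq x : [set y | L k y == L k x] = [set y | connect (coadj s) x y].
Proof.
apply/setP => y; rewrite !inE; apply/idP/idP.
- move=> /eqP hy.
  have [mx [hmx cx]] := L_conn x (leqnSn k).
  have [my [hmy cy]] := L_conn y (leqnSn k).
  have emy : mx = my by apply: val_inj; rewrite /= -hmx -hmy hy.
  subst my. rewrite (sym_connect_sym coadj_sym) in cx.
  exact: connect_trans cx cy.
- move=> /connectP [p hp ->]. apply/eqP.
  elim: p x hp => [|z p IH] x //= /andP [hxz hp].
  by rewrite (IH _ hp) (Lconst hxz).
Qed.

Lemma part_ok : [set [set y | L k y == L k x] | x : 'I_n] = co_components s.
Proof. by rewrite /co_components; apply: eq_imset => x; exact: part_eq. Qed.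
End Fix.

Section Path.
Variable v : 'I_n.
Hypothesis Hv : L k.+1 v != L k v.

Fixpoint wr i := if i is i'.+1 then par (k.+1 - i') (wr i') else v.
Definition w t := wr (k.+1 - t).

Lemma w_step t : t <= k -> w t = par t.+1 (w t.+1).
Proof.
move=> ht; rewrite /w.
have -> : k.+1 - t = (k - t).+1 by lia.
rewrite /= subSS. have -> : k.+1 - (k - t) = t.+1 by lia. by [].
Qed.

Lemma w_last : w k.+1 = v.
Proof. by rewrite /w subnn. Qed.

Lemma wL t : t <= k.+1 -> L t (w t) = L k.+1 v.
Proof.
move=> ht; have -> : t = k.+1 - (k.+1 - t) by lia.
elim: (k.+1 - t) (leq_subr t k.+1) => [|i IH] hi; first by rewrite subn0 w_last.
have e : k.+1 - i = (k - i).+1 by lia.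
rewrite e in IH. rewrite subSS w_step; last by lia.
rewrite -HL; last by lia.
by apply: IH; lia.
Qed.

Lemma w0 : (w 0 : nat) = L k.+1 v.
Proof. by rewrite -(wL (leq0n _)) H0. Qed.

Lemma w_reach i j : i <= j -> j <= k.+1 -> reach (j - i) (w i) (w j).
Proof.
elim: j => [|j IH] hij hj.
  by move: hij; rewrite leqn0 => /eqP -> /=.
case: (ltngtP i j.+1) => [h||h]; last by rewrite h subnn /=.
- have h1 := IH h (ltnW hj).
  have h2 : reach 1 (w j) (w j.+1).
    by apply: reach1; rewrite w_step //; apply: Hpar.
  have := reach_trans h1 h2. by rewrite addn1 subSn.
- lia.
Qed.

Lemma noshort i j : i < j -> j <= k.+1 ->
  ((w i == w j) || ((i.+1 < j) && coadj s (w i) (w j))) -> False.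
Proof.
move=> hij hj hc.
have h1 := w_reach (leq0n i) (leq_trans (ltnW hij) hj).
rewrite subn0 in h1.
have h3 := w_reach hj (leqnn _).
rewrite w_last in h3.
have hr : reach k (w 0) v.
  case/orP: hc => [/eqP e|/andP [hl hc]].
  - rewrite -e in h3. have := reach_trans h1 h3. apply: reach_mono. lia.
  - have h2 : reach 1 (w i) (w j) by apply: reach1; rewrite hc orbT.
    have := reach_trans (reach_trans h1 h2) h3. apply: reach_mono. lia.
have := reach_L (leqnSn k) hr. rewrite w0 => h.
have := Hle v (leqnn k). move: Hv h. lia.
Qed.

Lemma w_inj i j : i <= k.+1 -> j <= k.+1 -> w i = w j -> i = j.
Proof.
move=> hi hj e; case: (ltngtP i j) => // h.
- by case: (noshort h hj); rewrite e eqxx.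
- by case: (noshort h hi); rewrite e eqxx.
Qed.

Lemma adj_w i j : i <= k.+1 -> j <= k.+1 -> i != j ->
  adj s (w i) (w j) = (i.+1 != j) && (j.+1 != i).
Proof.
wlog hij : i j / i < j.
  move=> W hi hj hne; case: (ltngtP i j) => h.
  - exact: W.
  - by rewrite adjC W // 1?eq_sym // andbC.
  - by rewrite h eqxx in hne.
move=> hi hj _.
have hne : w i != w j by apply/eqP => e; have := w_inj hi hj e; lia.
have [e|ne] := eqVneq i.+1 j.
- subst j; rewrite /=.
  have hik : i <= k by [].
  have := Hpar (w i.+1) hik; rewrite -w_step //.
  by rewrite (negbTE hne) /= /coadj => /andP [_ /negbTE ->].
- have hc : ~~ coadj s (w i) (w j).
    apply/negP => hc; apply: (noshort hij hj); rewrite hc andbT. apply/orP; right. lia.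
  move: hc; rewrite /coadj hne /= negbK => ->.
  have -> : j.+1 != i by lia.
  by [].
Qed.

Lemma path_ok : induced_coP s (k + 2) (map w (iota 0 (k + 2))).
Proof.
split; first by rewrite size_map size_iota.
split.
  rewrite map_inj_in_uniq ?iota_uniq // => i j; rewrite !mem_iota /= => hi hj.
  apply: w_inj; lia.
move=> i j x y hx hy hne.
have hx' := hx; have hy' := hy.
move: hx' hy'; rewrite !onth_map.
case hi : (onth (iota 0 (k+2)) i) => [a|] //= [ea].
case hj : (onth (iota 0 (k+2)) j) => [b|] //= [eb].
have := onthTE (iota 0 (k+2)) i; rewrite hi size_iota /= => /esym li.
have := onthTE (iota 0 (k+2)) j; rewrite hj size_iota /= => /esym lj.
have := @onth_nth _ 0 _ _ _ hi; rewrite nth_iota // add0n => ea'.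
have := @onth_nth _ 0 _ _ _ hj; rewrite nth_iota // add0n => eb'.
subst. apply: adj_w => //; lia.
Qed.
End Path.
End Graph.

Fixpoint bits W m : bitseq := if W is W'.+1 then odd m :: bits W' m./2 else [::].
Fixpoint unbits (b : bitseq) : nat := if b is x :: b' then x + (unbits b').*2 else 0.

Lemma size_bits W m : size (bits W m) = W.
Proof. by elim: W m => //= W IH m; rewrite IH. Qed.

Lemma unbitsK W m : m < 2 ^ W -> unbits (bits W m) = m.
Proof.
elim: W m => [|W IH] m /=; first by rewrite expn0; case: m.
move=> hm; rewrite IH; first exact: odd_double_half.
rewrite expnS in hm. rewrite -divn2. apply: (@leq_trans (m %/ 2).+1) => //.
rewrite ltn_divLR //. lia.
Qed.

Lemma leq_expb a b c : a <= b -> a ^ c <= b ^ c.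
Proof. by move=> h; elim: c => // c IH; rewrite !expnS leq_mul. Qed.

Section Enc.
Variables (n : nat) (T : finType) (x0 : T) (W : nat).
Hypothesis HW : #|T| <= 2 ^ W.
Variables (P : nat) (step : T -> {set 'I_n} -> T) (endp : T -> T) (out : T -> answer n).

Definition enc (x : T) : bitseq := bits W (enum_rank x).
Definition dec (b : bitseq) : T := nth x0 (enum T) (unbits b).

Lemma encK : cancel enc dec.
Proof.
move=> x; rewrite /dec /enc unbitsK ?nth_enum_rank //.
exact: leq_trans (ltn_ord _) HW.
Qed.

Definition mkS : salg n :=
  SAlg P (enc x0) (fun b e => enc (step (dec b) e)) (fun b => enc (endp (dec b)))
    (fun b => out (dec b)).

Lemma foldl_enc s x : foldl (sa_step mkS) (enc x) s = enc (foldl step x s).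
Proof. by elim: s x => //= e s IH x; rewrite encK IH. Qed.

Lemma scanl_enc s x : scanl (sa_step mkS) (enc x) s = map enc (scanl step x s).
Proof. by elim: s x => //= e s IH x; rewrite encK IH. Qed.

Definition runX s x := endp (foldl step x s).

Lemma state_enc s i : state_at mkS s i = enc (iter i (runX s) x0).
Proof.
elim: i => //= i IH; rewrite IH /run_pass foldl_enc /=. by rewrite encK.
Qed.

Lemma mkS_space s : uses_space mkS s W.
Proof.
split.
- move=> i _; rewrite state_enc scanl_enc all_map; apply/allP => y _ /=.
  by rewrite size_bits.
- by move=> i _; rewrite state_enc size_bits.
Qed.

Lemma mkS_out s : output mkS s = out (iter P (runX s) x0).
Proof. by rewrite /output state_enc /= encK. Qed.

Lemma mkS_passes : sa_passes mkS = P.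
Proof. by []. Qed.
End Enc.

Lemma card_split (T : finType) (A : {set T}) (p1 p2 : pred T) :
  (forall x, p1 x -> p2 x -> False) ->
  #|[set x in A | p1 x || p2 x]| = #|[set x in A | p1 x]| + #|[set x in A | p2 x]|.
Proof.
move=> hd.
have -> : [set x in A | p1 x || p2 x] = [set x in A | p1 x] :|: [set x in A | p2 x].
  by apply/setP => x; rewrite !inE; case: (x \in A); case: (p1 x).
rewrite -cardsUI.
have -> : [set x in A | p1 x] :&: [set x in A | p2 x] = set0.
  apply/setP => x; rewrite !inE; apply/negP => /andP [/andP [_ h1] /andP [_ h2]].
  exact: hd h1 h2.
by rewrite cards0 addn0.
Qed.

Section Alg.
Variables (n' k : nat).
Local Notation n := n'.+1.
Definition u := up_log 2 n.
Definition Bm := 3 * u.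
Definition K := n * n.

Definition LabT := {ffun 'I_k.+2 -> {ffun 'I_n -> 'I_n}}.
Definition BndT := {ffun 'I_n -> 'I_K.+1}.
Definition Dt := ('I_k.+2 * 'I_Bm.+1 * (LabT * LabT) * (BndT * BndT))%type.

Definition dr (D : Dt) := D.1.1.1.
Definition dj (D : Dt) := D.1.1.2.
Definition dL (D : Dt) := D.1.2.1.
Definition dP (D : Dt) := D.1.2.2.
Definition dlo (D : Dt) := D.2.1.
Definition dhi (D : Dt) := D.2.2.
Definition mkD r j LL PP lo hi : Dt := (r, j, (LL, PP), (lo, hi)).

Definition key (L : {ffun 'I_n -> 'I_n}) (x : 'I_n) : nat := L x * n + x.
Definition mid (D : Dt) v : nat := (dlo D v + dhi D v) %/ 2.
Definition Q (D : Dt) v : {set 'I_n} := [set x | key (dL D (dr D)) x <= mid D v].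

Definition setL (F : LabT) (i : nat) (g : {ffun 'I_n -> 'I_n}) : LabT :=
  [ffun t : 'I_k.+2 => if (t : nat) == i then g else F t].

Definition lo0 : BndT := [ffun _ => inord 0].
Definition hiK : BndT := [ffun _ => inord K].
Definition cand (hi : BndT) v : 'I_n := inord (hi v %% n).
Definition newpar (L : {ffun 'I_n -> 'I_n}) (hi : BndT) : {ffun 'I_n -> 'I_n} :=
  [ffun v => if (hi v < K) && (L (cand hi v) < L v) then cand hi v else v].
Definition newL (L : {ffun 'I_n -> 'I_n}) (hi : BndT) : {ffun 'I_n -> 'I_n} := [ffun v => L (newpar L hi v)].

Definition blo (D : Dt) (o : {ffun 'I_n -> bool}) : BndT :=
  [ffun v => if o v || (K <= mid D v) then dlo D v else inord (mid D v).+1].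
Definition bhi (D : Dt) (o : {ffun 'I_n -> bool}) : BndT :=
  [ffun v => if o v || (K <= mid D v) then inord (mid D v) else dhi D v].

Definition Upd (D : Dt) (o : {ffun 'I_n -> bool}) : Dt :=
  if (dj D : nat) < Bm then mkD (dr D) (inord (dj D).+1) (dL D) (dP D) (blo D o) (bhi D o)
  else let L := dL D (dr D) in
       mkD (inord (dr D).+1) (inord 0) (setL (dL D) (dr D).+1 (newL L (bhi D o)))
           (setL (dP D) (dr D).+1 (newpar L (bhi D o))) lo0 hiK.

Definition D0 : Dt :=
  mkD (inord 0) (inord 0) [ffun _ => [ffun x => x]] [ffun _ => [ffun x => x]] lo0 hiK.

Definition CtT := {ffun 'I_n -> 'I_n.+1}.
Definition X := (Dt * CtT)%type.
Definition c0 : CtT := [ffun _ => inord 0].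
Definition cnt1 (D : Dt) v (e : {set 'I_n}) := #|[set y in Q D v :\ v | e == [set v; y]]|.
Definition step (x : X) (e : {set 'I_n}) : X :=
  (x.1, [ffun v => inord (minn (x.2 v + cnt1 x.1 v e) n)]).
Definition endp (x : X) : X := (Upd x.1 [ffun v => x.2 v < #|Q x.1 v :\ v|], c0).
Definition P := k.+1 * Bm.+1.
Definition outD (D : Dt) : answer n :=
  let L := fun t (v : 'I_n) => (dL D (inord t) v : nat) in
  let par := fun t v => dP D (inord t) v in
  if [forall v, L k.+1 v == L k v] then Partition [set [set y | L k y == L k x] | x : 'I_n]
  else if [pick v | L k.+1 v != L k v] is Some v then
         CoPath (map (w k par v) (iota 0 (k + 2)))
  else Partition set0.
Definition out (x : X) := outD x.1.
Definition X0 : X := (D0, c0).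

Variable s : seq {set 'I_n}.
Definition orc (D : Dt) : {ffun 'I_n -> bool} := [ffun v => [exists y in Q D v, coadj s v y]].
Definition G D := Upd D (orc D).

Lemma fold_cnt D (c : CtT) s' : uniq s' ->
  foldl step (D, c) s' =
  (D, [ffun v => inord (minn (c v + #|[set y in Q D v :\ v | [set v; y] \in s']|) n)]).
Proof.
elim: s' c => [|e s' IH] c /=.
  move=> _; congr pair; apply/ffunP => v; rewrite ffunE.
  have -> : [set y in Q D v :\ v | [set v; y] \in [::]] = set0.
    by apply/setP => y; rewrite !inE andbF.
  rewrite cards0 addn0; apply: ord_inj; rewrite inordK; have := ltn_ord (c v); first by move=> h; symmetry; apply/minn_idPl. by move=> h; rewrite ltnS geq_minr.
move=> /andP [he hu]; rewrite IH //; congr pair; apply/ffunP => v; rewrite !ffunE.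
apply: ord_inj.
have e1 : #|[set y in Q D v :\ v | [set v; y] \in e :: s']| =
   cnt1 D v e + #|[set y in Q D v :\ v | [set v; y] \in s']|.
  rewrite /cnt1 -card_split.
    by apply: eq_card => y; rewrite !inE [e == _]eq_sym.
  by move=> y /eqP <-; rewrite (negbTE he).
rewrite e1 inordK; last lia.
rewrite inordK; last lia.
rewrite inordK; last lia.
rewrite /=; have := ltn_ord (c v); lia.
Qed.

Lemma orc_cnt D v : uniq s ->
  (minn #|[set y in Q D v :\ v | [set v; y] \in s]| n < #|Q D v :\ v|) = orc D v.
Proof.
move=> hu; rewrite /orc ffunE.
set A := Q D v :\ v.
have hA : #|A| <= n by have := max_card A; rewrite card_ord.
have e : #|A| = #|[set y in A | [set v; y] \in s]| + #|[set y in A | [set v; y] \notin s]|.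
  rewrite -card_split; last by move=> y ->.
  by apply: eq_card => y; rewrite !inE orbN andbT.
have -> : (minn #|[set y in A | [set v; y] \in s]| n < #|A|) =
          (0 < #|[set y in A | [set v; y] \notin s]|) by lia.
apply/card_gt0P/existsP => [[y]|[y]].
- rewrite !inE => /andP [/andP [hyv hyQ] hns]; exists y.
  by rewrite inE hyQ /coadj /adj eq_sym hyv /= (negbTE hns).
- move=> /andP [hyQ]; rewrite inE in hyQ; rewrite /coadj /adj => /andP [hvy].
  rewrite hvy /= => hns; exists y.
  by rewrite !inE hyQ hns eq_sym hvy.
Qed.

Lemma pass_ok D : uniq s -> runX step endp s (D, c0) = (G D, c0).
Proof.
move=> hu; rewrite /runX fold_cnt // /endp /G /=; congr (Upd _ _, _).
apply/ffunP => v; rewrite !ffunE inordK; last first.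
  have := geq_minr #|[set y in Q D v :\ v | [set v; y] \in s]| n; lia.
by rewrite inordK // add0n (orc_cnt D v hu) /orc ffunE.
Qed.

Definition Pv (L : {ffun 'I_n -> 'I_n}) v t :=
  [exists x, coadj s v x && (key L x <= t)] || (K <= t).

Lemma Pv_mono L v t t' : t <= t' -> Pv L v t -> Pv L v t'.
Proof.
move=> htt; rewrite /Pv => /orP [/existsP [x /andP [hx hk]]|hK].
- apply/orP; left; apply/existsP; exists x; rewrite hx /=; exact: leq_trans hk htt.
- apply/orP; right; exact: leq_trans hK htt.
Qed.

Definition bsinv (p : nat -> bool) lo hi b :=
  [/\ lo <= hi, p hi, (forall t, t < lo -> ~~ p t) & hi - lo < 2 ^ b].

Lemma bs_step (p : nat -> bool) lo hi b : (forall t t', t <= t' -> p t -> p t') ->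
  bsinv p lo hi b.+1 ->
  bsinv p (if p ((lo + hi) %/ 2) then lo else ((lo + hi) %/ 2).+1)
          (if p ((lo + hi) %/ 2) then (lo + hi) %/ 2 else hi) b.
Proof.
move=> hm [h1 h2 h3 h4]; rewrite expnS in h4.
case hp: (p _).
- split => //; lia.
- have hne : (lo + hi) %/ 2 < hi.
    rewrite ltn_neqAle; apply/andP; split; last lia.
    by apply/eqP => e; rewrite e h2 in hp.
  split => //; last lia.
  move=> t ht; apply/negP => hpt.
  have ht' : t <= (lo + hi) %/ 2 by lia.
  by have := hm _ _ ht' hpt; rewrite hp.
Qed.

Lemma orc_Pv D v : orc D v || (K <= mid D v) = Pv (dL D (dr D)) v (mid D v).
Proof.
rewrite /orc /Pv ffunE; congr orb; apply: eq_existsb => x.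
by rewrite /Q inE andbC.
Qed.

Lemma mid_le D v : mid D v <= K.
Proof. rewrite /mid; have := ltn_ord (dlo D v); have := ltn_ord (dhi D v); lia. Qed.

Lemma blo_val D v : (blo D (orc D) v : nat) =
  if Pv (dL D (dr D)) v (mid D v) then (dlo D v : nat) else (mid D v).+1.
Proof.
rewrite /blo ffunE orc_Pv; case hp: (Pv _ _ _) => //.
rewrite inordK //; move: hp; rewrite /Pv => /norP [_ hp].
lia.
Qed.
Lemma bhi_val D v : (bhi D (orc D) v : nat) =
  if Pv (dL D (dr D)) v (mid D v) then mid D v else (dhi D v : nat).
Proof.
rewrite /bhi ffunE orc_Pv; case hp: (Pv _ _ _) => //.
by rewrite inordK // ltnS mid_le.
Qed.

Lemma key_lt L x : key L x < K.
Proof. rewrite /key /K; have := ltn_ord (L x); have := ltn_ord x; nia. Qed.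

Lemma key_mod L x : key L x %% n = x.
Proof. by rewrite /key modnMDl modn_small. Qed.

Lemma key_cmp L x y : key L y <= key L x -> L y <= L x.
Proof. rewrite /key; have := ltn_ord x; have := ltn_ord y; nia. Qed.

Section Round.
Variables (L : {ffun 'I_n -> 'I_n}) (hi : BndT).
Hypothesis Hhi1 : forall v, Pv L v (hi v).
Hypothesis Hhi2 : forall v t, t < hi v -> ~~ Pv L v t.

Lemma hi_witness v : hi v < K -> coadj s v (cand hi v).
Proof.
move=> hK; have := Hhi1 v; rewrite /Pv leqNgt hK orbF => /existsP [x /andP [hx hk]].
have e : key L x = hi v.
  apply/eqP; rewrite eqn_leq hk /=; rewrite leqNgt; apply/negP => hlt.
  move/negP: (Hhi2 hlt); apply; rewrite /Pv; apply/orP; left.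
  by apply/existsP; exists x; rewrite hx leqnn.
have -> : cand hi v = x by apply: ord_inj; rewrite /cand inordK -e key_mod.
exact: hx.
Qed.

Lemma hi_min v x : coadj s v x -> hi v < K /\ L (cand hi v) <= L x.
Proof.
move=> hx.
have hle : hi v <= key L x.
  rewrite leqNgt; apply/negP => hlt; move/negP: (Hhi2 hlt); apply; rewrite /Pv.
  by apply/orP; left; apply/existsP; exists x; rewrite hx leqnn.
have hK : hi v < K by exact: leq_ltn_trans hle (key_lt L x).
split => //.
have := Hhi1 v; rewrite /Pv leqNgt hK orbF => /existsP [y /andP [hy hk]].
have e : key L y = hi v.
  apply/eqP; rewrite eqn_leq hk /=; rewrite leqNgt; apply/negP => hlt.
  move/negP: (Hhi2 hlt); apply; rewrite /Pv; apply/orP; left.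
  by apply/existsP; exists y; rewrite hy leqnn.
have -> : cand hi v = y by apply: ord_inj; rewrite /cand inordK -e key_mod.
apply: key_cmp; by rewrite e.
Qed.

Lemma newpar_ok v : (newpar L hi v == v) || coadj s (newpar L hi v) v.
Proof.
rewrite /newpar ffunE; case: ifP => [/andP [hK _]|_]; last by rewrite eqxx.
by rewrite coadjC hi_witness // orbT.
Qed.

Lemma newL_le v : newL L hi v <= L v.
Proof.
rewrite /newL /newpar !ffunE; case: ifP => [/andP [_ h]|_] //; exact: ltnW.
Qed.

Lemma newL_min v x : coadj s x v -> newL L hi v <= L x.
Proof.
rewrite coadjC => hx; have [hK hc] := hi_min hx.
rewrite /newL /newpar !ffunE hK /=; case: ifP => [_|/negbT] //.
rewrite -leqNgt => h; exact: leq_trans h hc.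
Qed.
End Round.

Definition Lf (LL : LabT) t v : nat := LL (inord t) v.
Definition Pf (PP : LabT) t v : 'I_n := PP (inord t) v.

Definition Good r (LL PP : LabT) :=
  [/\ (forall v, Lf LL 0 v = v),
      (forall t v, t < r -> (Pf PP t.+1 v == v) || coadj s (Pf PP t.+1 v) v),
      (forall t v, t < r -> Lf LL t.+1 v = Lf LL t (Pf PP t.+1 v)),
      (forall t v, t < r -> Lf LL t.+1 v <= Lf LL t v) &
      (forall t v x, t < r -> coadj s x v -> Lf LL t.+1 v <= Lf LL t x)].

Lemma setL_at (F : LabT) i g t : t <= k.+1 ->
  setL F i g (inord t) = if t == i then g else F (inord t).
Proof. by move=> ht; rewrite /setL ffunE inordK. Qed.

Lemma u_bound : n <= 2 ^ u.
Proof. exact: up_logP. Qed.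

Lemma K_bound : K < 2 ^ Bm.+1.
Proof.
rewrite /K /Bm; have h := u_bound.
have h2 : n * n <= 2 ^ u * 2 ^ u by apply: leq_mul.
rewrite -expnD in h2. apply: leq_ltn_trans h2 _.
rewrite ltn_exp2l //; lia.
Qed.

Section Rnd.
Variables (r : nat) (LL PP : LabT).
Hypothesis hr : r <= k.
Let L := LL (inord r).

Lemma inner j : j <= Bm -> exists lo hi : BndT,
  iter j G (mkD (inord r) (inord 0) LL PP lo0 hiK) = mkD (inord r) (inord j) LL PP lo hi /\
  forall v, bsinv (Pv L v) (lo v) (hi v) (Bm.+1 - j).
Proof.
elim: j => [|j IH] hj.
  exists lo0, hiK; split => // v; rewrite /lo0 /hiK !ffunE !inordK // subn0.
  split => //; first by rewrite /Pv leqnn orbT.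
  by rewrite subn0; exact: K_bound.
have [lo [hi [e hinv]]] := IH (ltnW hj).
rewrite iterS e.
set D := mkD _ _ _ _ _ _.
exists (blo D (orc D)), (bhi D (orc D)); split.
  rewrite /G /Upd /= inordK; last lia.
  by rewrite hj.
move=> v; rewrite blo_val bhi_val.
have -> : Bm.+1 - j.+1 = Bm - j by lia.
rewrite /D /mid /=.
apply: bs_step; first exact: Pv_mono.
have := hinv v; have -> : Bm.+1 - j = (Bm - j).+1 by lia.
by [].
Qed.

Lemma round : exists LL' PP',
  iter Bm.+1 G (mkD (inord r) (inord 0) LL PP lo0 hiK) =
    mkD (inord r.+1) (inord 0) LL' PP' lo0 hiK /\
  (Good r LL PP -> Good r.+1 LL' PP').
Proof.
have [lo [hi [e hinv]]] := inner (leqnn Bm).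
rewrite iterS e.
set D := mkD _ _ _ _ _ _.
set hi' := bhi D (orc D).
have hl : forall v, bsinv (Pv L v) (blo D (orc D) v) (hi' v) 0.
  move=> v; rewrite /hi' blo_val bhi_val /D /mid /=.
  apply: bs_step; first exact: Pv_mono.
  by have := hinv v; rewrite subSnn.
have H1 : forall v, Pv L v (hi' v) by move=> v; case: (hl v).
have H2 : forall v t, t < hi' v -> ~~ Pv L v t.
  move=> v t ht; case: (hl v) => h1 _ h3 h4.
  apply: h3; rewrite expn0 in h4; lia.
exists (setL LL r.+1 (newL L hi')), (setL PP r.+1 (newpar L hi')); split.
  rewrite /G /Upd /= inordK; last lia.
  rewrite ltnn inordK //; lia.
case=> g0 g1 g2 g3 g4.
have hLf : forall t v, t <= r -> Lf (setL LL r.+1 (newL L hi')) t v = Lf LL t v.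
  by move=> t v ht; rewrite /Lf setL_at; [have -> : (t == r.+1) = false by lia | lia].
have hPf : forall t v, t <= r -> Pf (setL PP r.+1 (newpar L hi')) t v = Pf PP t v.
  by move=> t v ht; rewrite /Pf setL_at; [have -> : (t == r.+1) = false by lia | lia].
have hLn : forall v, Lf (setL LL r.+1 (newL L hi')) r.+1 v = newL L hi' v.
  by move=> v; rewrite /Lf setL_at ?eqxx //; lia.
have hPn : forall v, Pf (setL PP r.+1 (newpar L hi')) r.+1 v = newpar L hi' v.
  by move=> v; rewrite /Pf setL_at ?eqxx //; lia.
have hLr : forall v, Lf LL r v = L v by [].
split.
- by move=> v; rewrite hLf.
- move=> t v; rewrite ltnS leq_eqVlt => /orP [/eqP ->|ht].
    by rewrite hPn; apply: newpar_ok.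
  by rewrite hPf //; apply: g1.
- move=> t v; rewrite ltnS leq_eqVlt => /orP [/eqP ->|ht].
    by rewrite hLn hPn hLf // hLr /newL ffunE.
  have ht' := ltnW ht; by rewrite hLf // hPf // hLf //; apply: g2.
- move=> t v; rewrite ltnS leq_eqVlt => /orP [/eqP ->|ht].
    by rewrite hLn hLf // hLr; apply: newL_le.
  have ht' := ltnW ht; by rewrite !hLf //; apply: g3.
- move=> t v x; rewrite ltnS leq_eqVlt => /orP [/eqP ->|ht] hx.
    by rewrite hLn hLf // hLr; apply: newL_min.
  have ht' := ltnW ht; by rewrite !hLf //; apply: g4.
Qed.
End Rnd.

Lemma run_rounds r : r <= k.+1 -> exists LL PP,
  iter (r * Bm.+1) G D0 = mkD (inord r) (inord 0) LL PP lo0 hiK /\ Good r LL PP.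
Proof.
elim: r => [|r IH] hr.
  exists [ffun _ => [ffun x => x]], [ffun _ => [ffun x => x]]; split => //.
  by split => // v; rewrite /Lf !ffunE.
have [LL [PP [e g]]] := IH (ltnW hr).
have [LL' [PP' [e' g']]] := @round r LL PP hr.
exists LL', PP'; split; last exact: g' g.
by rewrite mulSn iterD e e'.
Qed.

Lemma final_ok : correct_answer k s (outD (iter P G D0)).
Proof.
have [LL [PP [e [g0 g1 g2 g3 g4]]]] := run_rounds (leqnn k.+1).
rewrite /P e /outD /=.
case: ifP => [/forallP hf|hf].
  apply: (@part_ok _ s k (Lf LL) (Pf PP)) => //.
  by move=> v; apply/eqP; exact: hf.
case: pickP => [v hv|hn].
  exact: (@path_ok _ s k (Lf LL) (Pf PP)).
exfalso; move/negbT: hf => /forallPn [v hv].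
by have := hn v; rewrite hv.
Qed.

Lemma iter_run i : uniq s -> iter i (runX step endp s) X0 = (iter i G D0, c0).
Proof. by move=> hu; elim: i => //= i ->; rewrite pass_ok. Qed.
End Alg.

Lemma pow_bound a b c : a <= 2 ^ b -> a ^ c <= 2 ^ (b * c).
Proof. by move=> h; rewrite expnM; apply: leq_expb. Qed.

Section Card.
Variables (n' k : nat).
Local Notation n := n'.+1.
Local Notation u := (u n').

Definition Wd := k.+2 + (Bm n').+1 + (u * n * k.+2 + u * n * k.+2)
   + ((2 * u).+1 * n + (2 * u).+1 * n) + u.+1 * n.

Lemma card_X : #|{: X n' k}| <= 2 ^ Wd.
Proof.
rewrite /X /Dt /LabT /BndT /CtT !card_prod !card_ffun !card_ord.
have h1 : k.+2 <= 2 ^ k.+2 by apply: ltnW; apply: ltn_expl.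
have h2 : (Bm n').+1 <= 2 ^ (Bm n').+1 by apply: ltnW; apply: ltn_expl.
have hu := u_bound n'.
have h3 : (n ^ n) ^ k.+2 <= 2 ^ (u * n * k.+2).
  by apply: pow_bound; apply: pow_bound.
have h5 : (K n').+1 ^ n <= 2 ^ ((2 * u).+1 * n).
  apply: pow_bound; rewrite /K expnS mul2n -addnn.
  have : n * n <= 2 ^ u * 2 ^ u by apply: leq_mul.
  rewrite -expnD addnn -mul2n => h.
  have : 1 <= 2 ^ (2 * u) by rewrite expn_gt0.
  lia.
have h7 : n.+1 ^ n <= 2 ^ (u.+1 * n).
  apply: pow_bound; rewrite expnS.
  have : 1 <= 2 ^ u by rewrite expn_gt0.
  lia.
have := leq_mul (leq_mul (leq_mul (leq_mul h1 h2) (leq_mul h3 h3)) (leq_mul h5 h5)) h7.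
by rewrite -!expnD.
Qed.
End Card.

Lemma uses_space_mono n (A : salg n) s W S : W <= S -> uses_space A s W -> uses_space A s S.
Proof.
move=> hWS [h1 h2]; split.
- move=> i hi; apply: sub_all (h1 i hi) => b /= hb; exact: leq_trans hb hWS.
- move=> i hi; exact: leq_trans (h2 i hi) hWS.
Qed.

Theorem lemma25 :
  exists (C d : nat), forall n k : nat, 2 <= n -> 1 <= k ->
    exists A : salg n,
      sa_passes A <= C * k * up_log 2 n /\
      forall s : seq {set 'I_n}, valid_stream s ->
        uses_space A s (C * k * n * (up_log 2 n) ^ d) /\
        correct_answer k s (output A s).
Proof.
exists 30, 1 => n k hn hk.
case: n hn => [|n'] // hn.
have hu : 1 <= up_log 2 n'.+1 by rewrite up_log_gt0.
exists (@mkS n'.+1 (X n' k) (X0 n' k) (Wd n' k) (P n' k) (@step n' k)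
          (@endp n' k) (@out n' k)).
split.
  rewrite mkS_passes /P /Bm /u; nia.
move=> s /andP [hs _]; split.
  apply: uses_space_mono (mkS_space _ (card_X n' k) _ _ _ _ _); rewrite /Wd /Bm /u expn1; nia.
rewrite (mkS_out _ (card_X n' k)) /out iter_run //.
exact: final_ok.
Qed.
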